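(* For any orientation-preserving homeomorphism $f:\mathbb{S}^1\to\mathbb{S}^1$, the induced map $C(f):C(\mathbb{S}^1)\to C(\mathbb{S}^1)$ satisfies $h_{\mathrm{pol}}(C(f))\le 2$.
   Context: $C(\mathbb{S}^1)$ is the set of all nonempty closed connected subsets of $\mathbb{S}^1$ with the Hausdorff metric $d_H(A,B)=\inf\{\varepsilon>0: A\subset U(B,\varepsilon),\ B\subset U(A,\varepsilon)\}$, $U(A,\varepsilon)=\{x: d(x,A)<\varepsilon\}$; $C(f)(A)=f(A)$. For a continuous map $g:Z\to Z$ of a compact metric space $(Z,\rho)$, define $\rho^g_n(x,y)=\max_{0\le k\le n-1}\rho(g^k(x),g^k(y))$; a finite set $E\subset Z$ is $(n,\varepsilon)$-separated if $\rho^g_n(x,y)\ge\varepsilon$ for all distinct $x,y\in E$; $\mathrm{sep}(n,\varepsilon)$ is the maximal cardinality of such a set; and $h_{\mathrm{pol}}(g)=\lim_{\varepsilon\to0}\limsup_{n\to\infty}\frac{\log \mathrm{sep}(n,\varepsilon)}{\log n}$. *)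

(* Defs.v *)
From HB Require Import structures.
From mathcomp Require Import all_boot all_order all_algebra.
From mathcomp Require Import all_classical all_reals all_analysis.
Set Implicit Arguments. Unset Strict Implicit. Unset Printing Implicit Defensive.
Import Order.TTheory GRing.Theory Num.Theory.
Import numFieldNormedType.Exports.
Local Open Scope classical_set_scope.
Local Open Scope ring_scope.

Section Defs.
Variable R : realType.

Definition S1 : set (R * R) := [set p | p.1 ^+ 2 + p.2 ^+ 2 = 1].

Definition dS1 (p q : R * R) : R := Num.sqrt ((p.1 - q.1) ^+ 2 + (p.2 - q.2) ^+ 2).

Definition expS1 (t : R) : R * R := (cos (2 * pi * t), sin (2 * pi * t)).

Definition homeo_S1 (f : R * R -> R * R) : Prop :=
  exists g : R * R -> R * R,
    (forall p, S1 p -> S1 (f p)) /\ (forall p, S1 p -> S1 (g p)) /\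
    (forall p, S1 p -> g (f p) = p) /\ (forall p, S1 p -> f (g p) = p) /\
    {within S1, continuous f} /\ {within S1, continuous g}.

Definition orient_pres_homeo_S1 (f : R * R -> R * R) : Prop :=
  homeo_S1 f /\
  exists F : R -> R, {homo F : x y / x < y} /\ forall t, f (expS1 t) = expS1 (F t).

Definition CS1 : set (set (R * R)) :=
  [set A | [/\ A `<=` S1, A !=set0, closed A & connected A]].

Definition dist_set (x : R * R) (A : set (R * R)) : R := inf [set dS1 x a | a in A].
Definition Unbhd (A : set (R * R)) (eps : R) : set (R * R) :=
  [set x | S1 x /\ dist_set x A < eps].

Definition dH (A B : set (R * R)) : R :=
  inf [set eps : R | 0 < eps /\ A `<=` Unbhd B eps /\ B `<=` Unbhd A eps].

Definition Cmap (f : R * R -> R * R) (A : set (R * R)) : set (R * R) := f @` A.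

Context {Z : Type}.
Variables (D : set Z) (rho : Z -> Z -> R) (g : Z -> Z).

Definition rho_n (n : nat) (x y : Z) : R :=
  \big[Num.max/0]_(k < n) rho (iter k g x) (iter k g y).

Definition sep (n : nat) (eps : R) : R :=
  sup [set x : R | exists k (E : 'I_k -> Z), x = k%:R /\ (forall i, D (E i)) /\
        (forall i j, i != j -> eps <= rho_n n (E i) (E j))].

Definition hpol_eps (eps : R) : \bar R :=
  limn_esup (fun n : nat => (ln (sep n eps) / ln n%:R)%:E).

Definition hpol : \bar R := lim (hpol_eps @ 0^'+).

End Defs.

(* Main.v *)
Require Import Defs.
From HB Require Import structures.
From mathcomp Require Import all_boot all_order all_algebra.
From mathcomp Require Import all_classical all_reals all_analysis.
From mathcomp Require Import ring lra zify.
Import Order.TTheory GRing.Theory Num.Theory.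
Import numFieldNormedType.Exports.
Local Open Scope classical_set_scope.
Local Open Scope ring_scope.

Section Exp.
Variable R : realType.
Local Notation e := (@expS1 R).

Lemma S1e t : S1 (e t).
Proof. by rewrite /S1 /expS1 /= cos2Dsin2. Qed.

Lemma eD1 t : e (t + 1) = e t.
Proof.
rewrite /expS1 mulrDr mulr1.
have -> : 2 * pi = pi *+ 2 :> R by rewrite mulr_natl.
by rewrite cosD2pi sinD2pi.
Qed.

Lemma eDn t (m : nat) : e (t + m%:R) = e t.
Proof.
elim: m => [|m IH]; first by rewrite addr0.
by rewrite -natr1 addrA eD1.
Qed.

Lemma eDz t (z : int) : e (t + z%:~R) = e t.
Proof.
case: z => m; first by rewrite -[(Posz m)%:~R]/(m%:R) eDn.
rewrite NegzE mulrNz.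
by rewrite -(eDn (t + - (m.+1)%:~R) m.+1) -addrA addNr addr0.
Qed.

Lemma cos2pi_eq1 x : cos (2 * pi * x) = 1 :> R -> exists z : int, x = z%:~R.
Proof.
move=> hx; exists (Num.floor x).
set z := Num.floor x; set r := x - z%:~R.
have [rge0 rlt1] : 0 <= r /\ r < 1.
  have /andP[h1 h2] := floor_itv x; move: h2; rewrite intrD => h2.
  rewrite /r /z; split; lra.
have cr : cos (2 * pi * r) = 1.
  have := eDz x (- z); rewrite /expS1 => -[+ _].
  by rewrite intrN -/(x - z%:~R) -/r hx.
have pi0 := pi_gt0 R.
suff : r = 0 by rewrite /r => /eqP; rewrite subr_eq0 => /eqP.
have [rh|rh] := leP r (1/2).
  have : 2 * pi * r = 0.
    apply: cos_inj; rewrite ?cr ?cos0 // !in_itv /= ?lexx ?pi_ge0 //.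
    apply/andP; split; nra.
  move=> h; nra.
exfalso.
have c1 : cos (2 * pi * (1 - r)) = 1.
  rewrite mulrBr mulr1 -[X in cos X]opprB cosN.
  have -> : 2 * pi = pi *+ 2 :> R by rewrite mulr_natl.
  by rewrite -[LHS]cosD2pi subrK -mulr_natl.
have : 2 * pi * (1 - r) = 0.
  apply: cos_inj; rewrite ?c1 ?cos0 // ?in_itv /= ?lexx ?pi_ge0 //.
  apply/andP; split; nra.
move=> h; nra.
Qed.

Lemma einj u v : e u = e v -> exists z : int, u = v + z%:~R.
Proof.
rewrite /expS1 => -[hc hs].
have : cos (2 * pi * (u - v)) = 1.
  by rewrite mulrBr cosB hc hs cos2Dsin2.
move=> /cos2pi_eq1 [z hz]; exists z; rewrite -hz; lra.
Qed.

Lemma einj_in a u v : a <= u < a + 1 -> a <= v < a + 1 -> e u = e v -> u = v.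
Proof.
move=> /andP[hu1 hu2] /andP[hv1 hv2] /einj [z hz].
have h1 : z%:~R < 1 :> R by lra.
have h2 : -1 < z%:~R :> R by lra.
have : z = 0.
  have h3 : (-1 : int) < z by rewrite -(ltr_int R) mulrNz.
  move: h1; rewrite ltrz1 => h1; lia.
by move=> z0; rewrite hz z0 addr0.
Qed.

Lemma esurj p : S1 p -> exists u, e u = p.
Proof.
case: p => c d; rewrite /S1 /= => h.
have hc : -1 <= c <= 1 by apply/andP; split; nra.
have ca := acosK; have sa := sin_acos hc.
have pi0 := pi_gt0 R.
have hsq : Num.sqrt (1 - c ^+ 2) = `|d|.
  by rewrite -sqrtr_sqr; congr Num.sqrt; lra.
have [d0|d0] := leP 0 d.
  exists (acos c / (2 * pi)); rewrite /expS1 mulrC divfK ?mulf_neq0 ?gt_eqF //.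
  by rewrite acosK ?in_itv //= sa hsq ger0_norm.
exists (- (acos c / (2 * pi))); rewrite /expS1 mulrN mulrC divfK ?mulf_neq0 ?gt_eqF //.
by rewrite cosN sinN acosK ?in_itv //= sa hsq ltr0_norm // opprK.
Qed.

Lemma esurj_in a p : S1 p -> exists2 u, a <= u < a + 1 & e u = p.
Proof.
move=> /esurj [u0 hu0].
exists (u0 + (- Num.floor (u0 - a))%:~R); last by rewrite eDz.
have /andP[h1 h2] := floor_itv (u0 - a).
rewrite intrN; move: h1 h2; rewrite intrD; set z := (Num.floor _)%:~R => h1 h2.
apply/andP; split; lra.
Qed.

Lemma econt : continuous e.
Proof.
move=> x; rewrite /expS1.
apply: (@cvg_pair _ _ _ (nbhs x) (nbhs (cos (2 * pi * x))) (nbhs (sin (2 * pi * x))) _ _ _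
  (fun t => cos (2 * pi * t)) (fun t => sin (2 * pi * t))).
- apply: continuous_comp; first exact: mulrl_continuous.
  exact: continuous_cos.
- apply: continuous_comp; first exact: mulrl_continuous.
  exact: continuous_sin.
Qed.

End Exp.

Section Lip.
Variable R : realType.
Local Notation e := (@expS1 R).
Implicit Types p q : (R * R)%type.

Lemma cos_lip (a b : R) : `|cos a - cos b| <= `|a - b|.
Proof.
wlog ab : a b / a <= b.
  move=> H; have [/H //|/ltW ba] := leP a b.
  by rewrite distrC [X in _ <= X]distrC; apply: H.
have [c _ hc] := MVT_segment (f := cos) (df := fun x => - sin x) ab
  (fun x _ => is_derive_cos x) ltac:(apply: continuous_subspaceT; exact: continuous_cos).
rewrite distrC hc [X in _ <= X]distrC normrM.
rewrite -[X in _ <= X]mul1r ler_wpM2r // normrN; exact: sin_max.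
Qed.

Lemma sin_lip (a b : R) : `|sin a - sin b| <= `|a - b|.
Proof.
wlog ab : a b / a <= b.
  move=> H; have [/H //|/ltW ba] := leP a b.
  by rewrite distrC [X in _ <= X]distrC; apply: H.
have [c _ hc] := MVT_segment (f := sin) (df := cos) ab
  (fun x _ => is_derive_sin x) ltac:(apply: continuous_subspaceT; exact: continuous_sin).
rewrite distrC hc [X in _ <= X]distrC normrM.
rewrite -[X in _ <= X]mul1r ler_wpM2r //; exact: cos_max.
Qed.

Lemma dS1_ge0 p q : 0 <= dS1 p q.
Proof. exact: sqrtr_ge0. Qed.

Lemma dS1C p q : dS1 p q = dS1 q p.
Proof. by rewrite /dS1 -[p.1 - q.1]opprB -[p.2 - q.2]opprB !sqrrN. Qed.

Lemma dS1xx p : dS1 p p = 0.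
Proof. by rewrite /dS1 !subrr expr0n /= addr0 sqrtr0. Qed.

Lemma sqrt_le_norm (a b : R) : Num.sqrt (a ^+ 2 + b ^+ 2) <= `|a| + `|b|.
Proof.
have H : a ^+ 2 + b ^+ 2 <= (`|a| + `|b|) ^+ 2.
  rewrite sqrrD -[a ^+ 2](real_normK (num_real a)) -[b ^+ 2](real_normK (num_real b)).
  rewrite -addrA lerD2l lerDr mulrn_wge0 // mulr_ge0 //.
apply: le_trans (ler_wsqrtr H) _.
by rewrite sqrtr_sqr ger0_norm ?addr_ge0.
Qed.

Lemma dS1_le p q : dS1 p q <= `|p.1 - q.1| + `|p.2 - q.2|.
Proof. exact: sqrt_le_norm. Qed.

Lemma elip u v : dS1 (e u) (e v) <= 4 * pi * `|u - v|.
Proof.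
apply: (le_trans (dS1_le _ _)); rewrite /expS1 /=.
have h1 := cos_lip (2 * pi * u) (2 * pi * v).
have h2 := sin_lip (2 * pi * u) (2 * pi * v).
have : `|2 * pi * u - 2 * pi * v| = 2 * pi * `|u - v|.
  by rewrite -mulrBr normrM ger0_norm // mulr_ge0 // pi_ge0.
move=> h; rewrite h in h1 h2.
have -> : 4 * pi * `|u - v| = 2 * pi * `|u - v| + 2 * pi * `|u - v|.
  by rewrite -mulrDl -mulrDl; congr (_ * _ * _); rewrite -natrD.
exact: lerD.
Qed.

End Lip.

Section Sep.
Variable R : realType.
Local Notation e := (@expS1 R).

Lemma closed_eimg (a b : R) : closed (e @` `[a, b]).
Proof.
apply: compact_closed; first exact: norm_hausdorff.
apply: continuous_compact; last exact: segment_compact.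
apply: continuous_subspaceT; exact: econt.
Qed.

Lemma sep_arc (a w : R) (C : set (R * R)) : a < w < a + 1 -> C `<=` @S1 R ->
  connected C -> ~ C (e a) -> ~ C (e w) ->
  forall x, a < x < w -> C (e x) -> C `<=` e @` `[a, w].
Proof.
move=> /andP[aw wa] CS cC Ca Cw x /andP[ax xw] Cx.
set B := C `&` e @` `[a, w].
suff <- : B = C by move=> y [].
apply: cC.
- exists (e x); split => //; exists x => //; rewrite /= in_itv /=; apply/andP; split; exact: ltW.
- exists (~` (e @` `[w, a + 1])); first by apply: closed_openC; exact: closed_eimg.
  apply/seteqP; split => y [Cy hy]; split => //.
  + move=> [r' hr' er']; case: hy => r hr er.
    move: hr hr'; rewrite /= !in_itv /= => /andP[ar rw] /andP[wr' r'a].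
    have [r'lt|r'eq] := ltP r' (a + 1).
      have rr' : r = r'.
        apply: (@einj_in R a); first (apply/andP; split => //; lra).
          apply/andP; split => //; lra.
        by rewrite er er'.
      have rw' : r = w by lra.
      by apply: Cw; rewrite -rw' er.
    have r'a1 : r' = a + 1 by lra.
    by apply: Ca; rewrite -(@eD1 R a) -r'a1 er'.
  + have [r /andP[ar ra] er] := @esurj_in R a _ (CS _ Cy).
    exists r => //; rewrite /= in_itv /=; apply/andP; split => //.
    rewrite leNgt; apply/negP => wr; apply: hy; exists r => //.
    by rewrite /= in_itv /=; apply/andP; split; exact: ltW.
- by exists (e @` `[a, w]) => //; exact: closed_eimg.
Qed.

End Sep.

Section Arc.
Variable R : realType.
Local Notation e := (@expS1 R).

Lemma closed_inf_in (T : set R) : closed T -> T !=set0 -> has_lbound T -> T (inf T).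
Proof.
move=> cT T0 lT; apply: contrapT => nT.
have : nbhs (inf T) (~` T).
  by apply: open_nbhs_nbhs; split => //; exact: closed_openC.
move=> /nbhs_ballP [r /= r0 hr].
have : inf T + r <= inf T.
  apply: lb_le_inf => // x Tx.
  have := ge_inf lT Tx; rewrite le_eqVlt => /orP[/eqP ex|lx].
    by exfalso; apply: nT; rewrite ex.
  rewrite leNgt; apply/negP => xr; apply: (hr x) => //.
  rewrite -ball_normE /= ltr0_norm ?subr_lt0 //; lra.
lra.
Qed.

Lemma closed_sup_in (T : set R) : closed T -> T !=set0 -> has_ubound T -> T (sup T).
Proof.
move=> cT T0 lT; apply: contrapT => nT.
have : nbhs (sup T) (~` T).
  by apply: open_nbhs_nbhs; split => //; exact: closed_openC.
move=> /nbhs_ballP [r /= r0 hr].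
have : sup T <= sup T - r.
  apply: ge_sup => // x Tx.
  have := ub_le_sup lT Tx; rewrite le_eqVlt => /orP[/eqP ex|lx].
    by exfalso; apply: nT; rewrite -ex.
  rewrite leNgt; apply/negP => xr; apply: (hr x) => //.
  rewrite -ball_normE /= gtr0_norm ?subr_gt0 //; lra.
lra.
Qed.

Lemma arc_rep (A : set (R * R)) : CS1 A -> ~ (@S1 R `<=` A) ->
  exists s t : R, [/\ 0 <= s < 1, s <= t < s + 1 & A = e @` `[s, t]].
Proof.
case=> AS [y Ay] cA conA nS.
have [p [Sp nAp]] : exists p, S1 p /\ ~ A p.
  apply: contrapT => h; apply: nS => q Sq; apply: contrapT => nq; apply: h.
  by exists q.
have [a ea] := @esurj R p Sp.
set T := [set u | a <= u <= a + 1 /\ A (e u)].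
have Tin u : T u -> a < u < a + 1.
  move=> [/andP[h1 h2] Au]; apply/andP; split.
    rewrite lt_neqAle h1 andbT; apply/eqP => h; apply: nAp.
    by rewrite -ea h.
  rewrite lt_neqAle h2 andbT; apply/eqP => h; apply: nAp.
  by rewrite -ea -(@eD1 R a) -h.
have Tint u v w : T u -> T v -> u <= w <= v -> T w.
  move=> Tu Tv /andP[uw wv].
  have /andP[au ua] := Tin _ Tu; have /andP[av va] := Tin _ Tv.
  split; first (apply/andP; split; lra).
  apply: contrapT => nAw.
  have [wu|wu] := eqVneq w u; first by apply: nAw; rewrite wu; exact: Tu.2.
  have [wv'|wv'] := eqVneq w v; first by apply: nAw; rewrite wv'; exact: Tv.2.
  have uw' : u < w by rewrite lt_neqAle eq_sym wu uw.
  have wv2 : w < v by rewrite lt_neqAle wv' wv.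
  have aw : a < w < a + 1 by apply/andP; split; lra.
  have nAa : ~ A (e a) by rewrite ea.
  have hu' : a < u < w by apply/andP; split; lra.
  have [r hr er] := @sep_arc R a w A aw AS conA nAa nAw u hu' Tu.2 _ Tv.2.
  move: hr; rewrite /= in_itv /= => /andP[ar rw].
  have : r = v.
    apply: (@einj_in R a); [apply/andP; split; lra|apply/andP; split; lra|exact: er].
  lra.
have cT : closed T.
  have -> : T = `[a, a + 1] `&` e @^-1` A.
    by apply/seteqP; split => u [h1 h2]; split => //=; move: h1; rewrite /= in_itv.
  apply: closedI.
    by apply: compact_closed; [exact: Rhausdorff|exact: segment_compact].
  exact: (continuous_closedP _).1 (@econt R) A cA.
have T0 : T !=set0.
  have [u /andP[h1 h2] eu] := @esurj_in R a y (AS _ Ay).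
  by exists u; split; [apply/andP; split; lra|rewrite eu].
have lT : has_lbound T by exists a => u [/andP[]].
have uT : has_ubound T by exists (a + 1) => u [/andP[]].
have Ts := @closed_inf_in T cT T0 lT.
have Tt := @closed_sup_in T cT T0 uT.
set s := inf T in Ts; set t := sup T in Tt.
have st : s <= t by apply: ge_inf.
have Aeq : A = e @` `[s, t].
  apply/seteqP; split => [q Aq|q [u hu <-]].
    have [u /andP[h1 h2] eu] := @esurj_in R a q (AS _ Aq).
    have Tu : T u by split; [apply/andP; split; lra|rewrite eu].
    exists u => //; rewrite /= in_itv /=; apply/andP; split.
      exact: ge_inf.
    exact: ub_le_sup.
  move: hu; rewrite /= in_itv /= => hu.
  exact: (Tint _ _ _ Ts Tt hu).2.
have /andP[as_ sa] := Tin _ Ts; have /andP[at_ ta] := Tin _ Tt.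
set z := Num.floor s.
have /andP[z1 z2] := floor_itv s; move: z2; rewrite intrD -/z => z2.
exists (s - z%:~R), (t - z%:~R); split.
- apply/andP; split; lra.
- apply/andP; split; lra.
rewrite Aeq; apply/seteqP; split => q [u hu <-].
  exists (u - z%:~R); last by rewrite -(@eDz R u (- z)) intrN.
  by move: hu; rewrite /= !in_itv /= => /andP[h1 h2]; apply/andP; split; lra.
exists (u + z%:~R); last by rewrite eDz.
by move: hu; rewrite /= !in_itv /= => /andP[h1 h2]; apply/andP; split; lra.
Qed.

End Arc.

Section Dyn.
Variable R : realType.
Local Notation e := (@expS1 R).
Variable f : R * R -> R * R.
Hypothesis fS : forall p, S1 p -> S1 (f p).
Hypothesis finj : forall p q, S1 p -> S1 q -> f p = f q -> p = q.
Hypothesis fcont : {within @S1 R, continuous f}.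

Lemma fkS k p : S1 p -> S1 (iter k f p).
Proof. by elim: k => [//|k IH] /IH /fS. Qed.

Lemma fkinj k p q : S1 p -> S1 q -> iter k f p = iter k f q -> p = q.
Proof.
elim: k => [//|k IH] Sp Sq /= h; apply: IH => //.
by apply: finj => //; exact: fkS.
Qed.

Lemma fk_sub k (X : set (R * R)) : X `<=` @S1 R -> iter k f @` X `<=` @S1 R.
Proof. by move=> XS _ [x Xx <-]; apply: fkS; exact: XS. Qed.

Lemma fk_conn k (X : set (R * R)) : X `<=` @S1 R -> connected X ->
  connected (iter k f @` X).
Proof.
move=> XS cX; elim: k => [|k IH].
  by rewrite (_ : iter 0 f @` X = X) //; apply/seteqP; split => [_ [x Xx <-]//|x Xx]; exists x.
have -> : iter k.+1 f @` X = f @` (iter k f @` X) by rewrite image_comp.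
apply: connected_continuous_connected => //.
exact: continuous_subspaceW (@fk_sub k X XS) fcont.
Qed.

Lemma iterC k A : iter k (Cmap f) A = iter k f @` A.
Proof.
elim: k => [|k IH] /=.
  by apply/seteqP; split => [x Ax|_ [x Ax <-]//]; exists x.
by rewrite IH /Cmap image_comp.
Qed.

End Dyn.

Section Haus.
Variable R : realType.
Implicit Types X Y : set (R * R).

Lemma dist_le Y x y : Y y -> dist_set x Y <= dS1 x y.
Proof.
move=> Yy; apply: ge_inf; last by exists y.
by exists 0 => _ [z _ <-]; exact: dS1_ge0.
Qed.

Lemma dH_lt X Y (d eps : R) : X `<=` @S1 R -> Y `<=` @S1 R -> 0 <= d -> d < eps ->
  (forall x, X x -> exists2 y, Y y & dS1 x y <= d) ->
  (forall y, Y y -> exists2 x, X x & dS1 y x <= d) -> dH X Y < eps.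
Proof.
move=> XS YS d0 de hXY hYX.
set e' := (d + eps) / 2.
have he' : d < e' < eps by apply/andP; split; rewrite /e'; lra.
apply: (@le_lt_trans _ _ e'); last by case/andP: he'.
apply: ge_inf.
  by exists 0 => r [h _]; exact: ltW.
split; first by case/andP: he' => h _; lra.
split.
  move=> x Xx; split; first exact: XS.
  have [y Yy hy] := hXY x Xx; apply: le_lt_trans (@dist_le Y x y Yy) _.
  case/andP: he' => h _; lra.
move=> y Yy; split; first exact: YS.
have [x Xx hx] := hYX y Yy; apply: le_lt_trans (@dist_le X y x Xx) _.
case/andP: he' => h _; lra.
Qed.

Lemma rho_n_lt (Z : Type) (rho : Z -> Z -> R) (g : Z -> Z) n x y (eps : R) :
  0 < eps -> (forall k, (k < n)%N -> rho (iter k g x) (iter k g y) < eps) ->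
  rho_n rho g n x y < eps.
Proof.
move=> e0 h; rewrite /rho_n.
elim/big_ind: _ => //.
  by move=> a b ha hb; rewrite gt_max ha hb.
by move=> i _; apply: h.
Qed.

End Haus.

Lemma bool_leq (a b : bool) : (a -> b) -> (a <= b)%N.
Proof. by case: a; case: b => // /(_ isT). Qed.

Section Count.
Variable R : realType.
Local Notation e := (@expS1 R).
Variable f : R * R -> R * R.
Hypothesis fS : forall p, S1 p -> S1 (f p).
Hypothesis finj : forall p q, S1 p -> S1 q -> f p = f q -> p = q.
Hypothesis fcont : {within @S1 R, continuous f}.
Variables N n : nat.
Hypothesis hN : (2 <= N)%N.

Definition Pj (j : nat) : R * R := e (j%:R / N%:R).
Definition vpt (k j l : nat) : R :=
  xget 3 [set v | l%:R <= v < l%:R + 1 /\ iter k f (e v) = Pj j].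
Definition tm (v u : R) : nat := addn (v < u)%R (v <= u)%R.
Definition phi (u : R) : nat :=
  \sum_(i : 'I_n * 'I_N * 'I_2) tm (vpt i.1.1 i.1.2 i.2) u.

Lemma tm_mono v u u' : u <= u' -> (tm v u <= tm v u')%N.
Proof.
move=> uu'; apply: leq_add; apply: bool_leq => h.
  exact: lt_le_trans h uu'.
exact: le_trans h uu'.
Qed.

Lemma phi_mono u u' : u <= u' -> (phi u <= phi u')%N.
Proof. by move=> uu'; apply: leq_sum => i _; apply: tm_mono. Qed.

Lemma phi_le u : (phi u <= 4 * (n * N))%N.
Proof.
apply: (@leq_trans (\sum_(i : 'I_n * 'I_N * 'I_2) 2)%N).
  apply: leq_sum => i _; rewrite /tm.
  by rewrite -[2%N]/(1 + 1)%N; apply: leq_add; apply: leq_b1.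
rewrite sum_nat_const !card_prod !card_ord. lia.
Qed.

Lemma phi_strict u u' w k j l : u < u' -> u <= w <= u' ->
  (k < n)%N -> (j < N)%N -> (l < 2)%N -> vpt k j l = w -> (phi u < phi u')%N.
Proof.
move=> uu' /andP[uw wu'] hk hj hl hv.
set i : 'I_n * 'I_N * 'I_2 := (Ordinal hk, Ordinal hj, Ordinal hl).
rewrite /phi (bigD1 i) //= [X in (_ < X)%N](bigD1 i) //=.
rewrite -addSn; apply: leq_add; last first.
  by apply: leq_sum => i' _; apply: tm_mono; exact: ltW.
rewrite /tm hv ltNge uw /=.
have [wu|wu] := eqVneq w u.
  by rewrite wu lexx uu' (ltW uu').
have uw' : u < w by rewrite lt_neqAle eq_sym wu uw.
rewrite leNgt uw' /= wu'.
by case: (w < u').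
Qed.

Lemma nohit u u' k j : 0 <= u -> u < u' -> u' < 2 -> phi u = phi u' ->
  (k < n)%N -> (j < N)%N -> forall w, u <= w <= u' -> iter k f (e w) <> Pj j.
Proof.
move=> u0 uu' u'2 hp hk hj w /andP[uw wu'] hw.
have [l hl lw] : exists2 l : nat, (l < 2)%N & l%:R <= w < l%:R + 1.
  case: (ltP w 1) => h; [exists 0%N | exists 1%N] => //; rewrite ?mulr0n ?mulr1n;
    apply/andP; split; lra.
have ex : exists v, l%:R <= v < l%:R + 1 /\ iter k f (e v) = Pj j by exists w.
have [hv1 hv2] : (l%:R <= vpt k j l < l%:R + 1) /\ iter k f (e (vpt k j l)) = Pj j :=
  xgetPex 3 ex.
have vw : vpt k j l = w.
  apply: (@einj_in R l%:R) => //.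
  apply: (@fkinj R f fS finj k); [exact: S1e|exact: S1e|by rewrite hv2 hw].
have := @phi_strict u u' w k j l uu' (introT andP (conj uw wu')) hk hj hl vw.
by rewrite hp ltnn.
Qed.

Lemma samecell u u' k : 0 <= u -> u <= u' -> u' < 2 -> phi u = phi u' ->
  (k < n)%N -> dS1 (iter k f (e u)) (iter k f (e u')) <= 4 * pi / N%:R.
Proof.
move=> u0 uu' u'2 hp hk.
have N0 : 0 < N%:R :> R by rewrite ltr0n; lia.
have pi0 := pi_gt0 R.
have b0 : 0 <= 4 * pi / N%:R :> R.
  by apply: mulr_ge0; [apply: mulr_ge0 => //; exact: ltW | rewrite invr_ge0 ltW].
have [ueq|une] := eqVneq u u'; first by rewrite ueq dS1xx.
have {une}uu2 : u < u' by rewrite lt_neqAle une uu'.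
set C := iter k f @` (e @` `[u, u']).
have eS : e @` `[u, u'] `<=` @S1 R by move=> _ [x _ <-]; exact: S1e.
have CS : C `<=` @S1 R := @fk_sub R f fS k _ eS.
have Cc : connected C.
  apply: (@fk_conn R f fS fcont k _ eS).
  apply: connected_continuous_connected.
    by apply/connected_intervalP; exact: interval_is_interval.
  by apply: continuous_subspaceT; exact: econt.
have noP j : (j < N)%N -> ~ C (Pj j).
  move=> hj [y [w hw <-] hy]; move: hw; rewrite /= in_itv /= => hw.
  exact: (@nohit u u' k j u0 uu2 u'2 hp hk hj w hw hy).
have Cu : C (iter k f (e u)).
  by exists (e u) => //; exists u => //; rewrite /= in_itv /= lexx uu'.
have Cu' : C (iter k f (e u')).
  by exists (e u') => //; exists u' => //; rewrite /= in_itv /= lexx uu'.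
have [r /andP[r0 r1] er] := @esurj_in R 0 _ (CS _ Cu).
rewrite add0r in r1.
set jj := Num.trunc (r * N%:R).
have /andP[t1 t2] := truncn_itv (mulr_ge0 r0 (ltW N0)); rewrite -/jj in t1 t2.
have hjj : (jj < N)%N.
  by rewrite -(ltr_nat R); apply: le_lt_trans t1 _; rewrite -[X in _ < X]mul1r ltr_pM2r.
set a : R := jj%:R / N%:R; set w : R := jj.+1%:R / N%:R.
have ar : a <= r by rewrite /a ler_pdivrMr.
have rw : r < w by rewrite /w ltr_pdivlMr.
have wa : w - a = 1 / N%:R by rewrite /w /a -mulrBl -natr1 addrAC subrr add0r.
have N1 : 1 / N%:R < 1 :> R.
  by rewrite ltr_pdivrMr // mul1r ltr1n.
have ar' : a < r.
  rewrite lt_neqAle ar andbT; apply/eqP => ar'.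
  by apply: (noP jj hjj); rewrite /Pj -/a ar' er.
have aw : a < w < a + 1 by apply/andP; split; lra.
have nCa : ~ C (e a) by exact: noP jj hjj.
have nCw : ~ C (e w).
  have [jN|jN] := ltnP jj.+1 N; first exact: noP jj.+1 jN.
  have jN' : jj.+1 = N by apply/eqP; rewrite eqn_leq jN hjj.
  have -> : w = 0 + 1 by rewrite /w jN' divff ?add0r // gt_eqF.
  rewrite eD1; have := noP 0%N (ltnW hN).
  by rewrite /Pj mul0r.
have hr : a < r < w by rewrite ar' rw.
have Cr : C (e r) by rewrite er.
have [r' /= hr' er'] := @sep_arc R a w C aw CS Cc nCa nCw r hr Cr _ Cu'.
rewrite -er -er'.
apply: le_trans (@elip R _ _) _.
move: hr'; rewrite in_itv /= => /andP[h1 h2].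
have : `|r - r'| <= 1 / N%:R.
  rewrite -wa ler_norml; apply/andP; split; lra.
move=> h; rewrite ler_pM2l ?mulr_gt0 // -div1r.
exact: h.
Qed.

End Count.

Section Key.
Variable R : realType.
Local Notation e := (@expS1 R).
Variable f : R * R -> R * R.
Hypothesis fS : forall p, S1 p -> S1 (f p).
Hypothesis finj : forall p q, S1 p -> S1 q -> f p = f q -> p = q.
Hypothesis fcont : {within @S1 R, continuous f}.
Variables N n : nat.
Hypothesis hN : (2 <= N)%N.
Variable eps : R.
Hypothesis heps : 4 * pi / N%:R < eps.
Local Notation ph := (phi R f N n).

Lemma arc_match s t s' t' x : s <= t -> s' <= t' ->
  ph s = ph s' -> ph t = ph t' -> s <= x <= t ->
  exists2 x', s' <= x' <= t' & ph x = ph x'.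
Proof.
move=> st st' hs ht /andP[sx xt].
have [hxs|hxs] := eqVneq (ph x) (ph s); first by exists s'; [rewrite lexx st'|rewrite hxs hs].
have [hxt|hxt] := eqVneq (ph x) (ph t); first by exists t'; [rewrite lexx st'|rewrite hxt ht].
exists x => //; apply/andP; split.
  rewrite leNgt; apply/negP => xs'.
  have h1 := phi_mono R f N n _ _ (ltW xs'); have h2 := phi_mono R f N n _ _ sx.
  by move/eqP: hxs; apply; apply/eqP; rewrite eqn_leq h2 andbT hs.
rewrite leNgt; apply/negP => tx'.
have h1 := phi_mono R f N n _ _ (ltW tx'); have h2 := phi_mono R f N n _ _ xt.
by move/eqP: hxt; apply; apply/eqP; rewrite eqn_leq h2 /= ht.
Qed.

Lemma close_pt x x' k : 0 <= x -> 0 <= x' -> x < 2 -> x' < 2 -> ph x = ph x' ->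
  (k < n)%N -> dS1 (iter k f (e x)) (iter k f (e x')) <= 4 * pi / N%:R.
Proof.
move=> x0 x'0 x2 x'2 hp hk.
have [xx'|x'x] := leP x x'.
  exact: (@samecell R f fS finj fcont N n hN x x' k x0 xx' x'2 hp hk).
rewrite dS1C; exact: (@samecell R f fS finj fcont N n hN x' x k x'0 (ltW x'x) x2 (esym hp) hk).
Qed.

Lemma dH_arcs s t s' t' k : 0 <= s -> s <= t -> t < 2 -> 0 <= s' -> s' <= t' -> t' < 2 ->
  ph s = ph s' -> ph t = ph t' -> (k < n)%N ->
  dH (iter k f @` (e @` `[s, t])) (iter k f @` (e @` `[s', t'])) < eps.
Proof.
move=> s0 st t2 s'0 st' t'2 hs ht hk.
have pi0 := pi_gt0 R.
have N0 : 0 < N%:R :> R by rewrite ltr0n; lia.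
have b0 : 0 <= 4 * pi / N%:R :> R.
  by apply: mulr_ge0; [apply: mulr_ge0 => //; exact: ltW | rewrite invr_ge0 ltW].
have eS (a b : R) : e @` `[a, b] `<=` @S1 R by move=> _ [x _ <-]; exact: S1e.
apply: (@dH_lt R _ _ _ _ (@fk_sub R f fS k _ (eS _ _)) (@fk_sub R f fS k _ (eS _ _)) b0 heps).
- move=> _ [_ [x hx <-] <-]; move: hx; rewrite /= in_itv /= => hx.
  have [x' hx' hp] := @arc_match s t s' t' x st st' hs ht hx.
  exists (iter k f (e x')); first by exists (e x') => //; exists x' => //; rewrite /= in_itv.
  case/andP: hx => h1 h2; case/andP: hx' => h3 h4.
  apply: close_pt => //; lra.
- move=> _ [_ [x hx <-] <-]; move: hx; rewrite /= in_itv /= => hx.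
  have [x' hx' hp] := @arc_match s' t' s t x st' st (esym hs) (esym ht) hx.
  exists (iter k f (e x')); first by exists (e x') => //; exists x' => //; rewrite /= in_itv.
  case/andP: hx => h1 h2; case/andP: hx' => h3 h4.
  apply: close_pt => //; lra.
Qed.

End Key.

Section Card.
Variable R : realType.
Local Notation e := (@expS1 R).
Variable f : R * R -> R * R.
Hypothesis fS : forall p, S1 p -> S1 (f p).
Hypothesis finj : forall p q, S1 p -> S1 q -> f p = f q -> p = q.
Hypothesis fcont : {within @S1 R, continuous f}.
Variables N n : nat.
Hypothesis hN : (2 <= N)%N.
Variable eps : R.
Hypothesis heps : 4 * pi / N%:R < eps.
Local Notation ph := (phi R f N n).

Definition isArc (A : set (R * R)) (st : R * R) : Prop :=
  [/\ 0 <= st.1 < 1, st.1 <= st.2 < st.1 + 1 & A = e @` `[st.1, st.2]].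

Definition key (A : set (R * R)) : option ('I_(4 * (n * N)).+1 * 'I_(4 * (n * N)).+1) :=
  if pselect (exists st, isArc A st) then
    Some (inord (ph (xget (0, 0) (isArc A)).1), inord (ph (xget (0, 0) (isArc A)).2))
  else None.

Lemma eps_gt0 : 0 < eps.
Proof.
apply: le_lt_trans heps.
have N0 : 0 < N%:R :> R by rewrite ltr0n; lia.
by apply: mulr_ge0; [apply: mulr_ge0 => //; exact: pi_ge0 | rewrite invr_ge0 ltW].
Qed.

Lemma notarc_S1 A : CS1 A -> ~ (exists st, isArc A st) -> A = @S1 R.
Proof.
move=> hA nA; apply/seteqP; split; first by case: hA.
apply: contrapT => nS; apply: nA.
have [s [t [h1 h2 h3]]] := @arc_rep R A hA nS.
by exists (s, t).
Qed.

Lemma key_close A B k : CS1 A -> CS1 B -> key A = key B -> (k < n)%N ->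
  dH (iter k f @` A) (iter k f @` B) < eps.
Proof.
move=> cA cB; rewrite /key; case: pselect => [hA|nA]; case: pselect => [hB|nB] //.
- move=> [ha hb] hk.
  have [/andP[s0 s1] /andP[st ts] ->] := xgetPex (0, 0) hA.
  have [/andP[s0' s1'] /andP[st' ts'] ->] := xgetPex (0, 0) hB.
  have b u : (ph u < (4 * (n * N)).+1)%N by rewrite ltnS; exact: phi_le.
  move/(congr1 (@nat_of_ord _)): ha; rewrite !inordK ?b // => ha.
  move/(congr1 (@nat_of_ord _)): hb; rewrite !inordK ?b // => hb.
  apply: (@dH_arcs R f fS finj fcont N n hN eps heps) => //; lra.
- move=> _ hk.
  rewrite (@notarc_S1 A cA nA) (@notarc_S1 B cB nB).
  have XS : iter k f @` @S1 R `<=` @S1 R := @fk_sub R f fS k _ (@subset_refl _ _).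
  apply: (@dH_lt R _ _ 0 _ XS XS (lexx _) eps_gt0).
    by move=> x Xx; exists x => //; rewrite dS1xx.
  by move=> x Xx; exists x => //; rewrite dS1xx.
Qed.

Lemma sep_count kk (E : 'I_kk -> set (R * R)) : (forall i, CS1 (E i)) ->
  (forall i j, i != j -> eps <= rho_n (@dH R) (Cmap f) n (E i) (E j)) ->
  (kk <= ((4 * (n * N)).+1 * (4 * (n * N)).+1).+1)%N.
Proof.
move=> hE hsep.
have inj : injective (fun i => key (E i)).
  move=> i j hij; apply/eqP; apply: contraT => nij.
  have h := hsep i j nij.
  suff : rho_n (@dH R) (Cmap f) n (E i) (E j) < eps by rewrite ltNge h.
  apply: rho_n_lt => [|k hk]; first exact: eps_gt0.
  rewrite !iterC; exact: key_close.
have := leq_card _ inj.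
by rewrite card_ord card_option card_prod !card_ord.
Qed.

End Card.

Section Final.
Variable R : realType.

Lemma sep_le (f : R * R -> R * R) (fS : forall p, S1 p -> S1 (f p))
  (finj : forall p q, S1 p -> S1 q -> f p = f q -> p = q)
  (fcont : {within @S1 R, continuous f}) (N n : nat) (hN : (2 <= N)%N)
  (eps : R) (heps : 4 * pi / N%:R < eps) :
  sep (@CS1 R) (@dH R) (Cmap f) n eps <= (((4 * (n * N)).+1 * (4 * (n * N)).+1).+1)%:R.
Proof.
apply: ge_sup.
  exists 0; exists 0%N, (fun _ => set0); split => //; split; by case.
move=> _ [k [E [-> [hD hs]]]]; rewrite ler_nat.
exact: (@sep_count R f fS finj fcont N n hN eps heps k E hD hs).
Qed.

Local Open Scope ereal_scope.

Lemma limsup_bound (s : nat -> R) (C : R) : (1 <= C)%R ->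
  (forall k, (1 <= k)%N -> (s k <= C * k%:R ^+ 2)%R) ->
  limn_esup (fun k => (ln (s k) / ln k%:R)%:E) <= 2%:E.
Proof.
move=> C1 hs.
apply/lee_addgt0Pr => d d0.
rewrite limn_esup_lim; apply: lime_le; first exact: is_cvg_esups.
set K := (ln C / d)%R.
set n0 := maxn 2 (Num.trunc (expR K)).+1.
exists n0 => // m /= hm.
apply: ge_ereal_sup => _ [k /= hk <-].
have hk0 : (n0 <= k)%N := leq_trans hm hk.
have k2 : (2 <= k)%N by apply: leq_trans hk0; exact: leq_maxl.
have kK : (expR K < k%:R)%R.
  have /andP[_ t2] := truncn_itv (expR_ge0 K).
  apply: lt_le_trans t2 _; rewrite ler_nat; apply: leq_trans hk0; exact: leq_maxr.
have k0 : (0 < k%:R :> R)%R by rewrite ltr0n; lia.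
have lK : (K < ln k%:R)%R.
  by rewrite -[X in (X < _)%R]expRK ltr_ln ?posrE ?expR_gt0.
have lk0 : (0 < ln (k%:R : R))%R by apply: ln_gt0; rewrite ltr1n; lia.
rewrite -EFinD lee_fin ler_pdivrMr //.
have hC : (ln C <= d * ln k%:R)%R.
  by move: lK; rewrite /K ltr_pdivrMr // => /ltW; rewrite mulrC.
have lC0 : (0 <= ln C)%R by apply: ln_ge0.
have hl : (ln (s k) <= ln C + 2 * ln k%:R)%R.
  have [sk|sk] := ltP 0%R (s k).
    have Cp : (0 < C)%R by apply: lt_le_trans C1; exact: ltr01.
    apply: (@le_trans _ _ (ln (C * k%:R ^+ 2))).
      rewrite ler_ln ?posrE ?mulr_gt0 ?exprn_gt0 //; apply: hs; lia.
    by rewrite lnM ?posrE ?exprn_gt0 // lnXn // mulr_natl.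
  rewrite ln0 //; apply: addr_ge0 => //; apply: mulr_ge0 => //; exact: ltW.
have -> : ((2 + d) * ln k%:R = 2 * ln k%:R + d * ln k%:R)%R by rewrite mulrDl.
lra.
Qed.

End Final.

Local Open Scope ereal_scope.

Theorem proposition1 (R : realType) (f : R * R -> R * R) :
  orient_pres_homeo_S1 f ->
  hpol (@CS1 R) (@dH R) (Cmap f) <= 2%:E.
Proof.
case=> [[g [fS [gS [gf [fg [fc gc]]]]]] _].
have finj p q : S1 p -> S1 q -> f p = f q -> p = q.
  by move=> Sp Sq h; rewrite -(gf p Sp) -(gf q Sq) h.
have key (eps : R) : (0 < eps)%R -> hpol_eps (@CS1 R) (@dH R) (Cmap f) eps <= 2%:E.
  move=> e0.
  set N := (Num.trunc (4 * pi / eps)).+2.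
  have hN : (2 <= N)%N by [].
  have pi0 := pi_gt0 R.
  have heps : (4 * pi / N%:R < eps)%R.
    have q0 : (0 <= 4 * pi / eps)%R.
      by apply: divr_ge0; [apply: mulr_ge0 => //; exact: ltW | exact: ltW].
    have /andP[_ t2] := truncn_itv q0.
    have hq : (4 * pi / eps < N%:R)%R.
      apply: lt_le_trans t2 _; rewrite ler_nat /N; lia.
    have N0 : (0 < N%:R :> R)%R by rewrite ltr0n.
    rewrite ltr_pdivrMr //; rewrite ltr_pdivrMr // in hq.
    by rewrite [(eps * _)%R]mulrC.
  apply: (@limsup_bound R _ (((4 * N).+1 * (4 * N).+1).+1)%:R).
    by rewrite ler1n.
  move=> k hk.
  apply: (le_trans (@sep_le R f fS finj fc N k hN eps heps)).
  rewrite -natrX -natrM ler_nat; nia.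
rewrite /hpol.
have [cv|ncv] := pselect (cvg (hpol_eps (@CS1 R) (@dH R) (Cmap f) @ 0^'+)).
  apply: lime_le => //; near=> eps; apply: key.
  by near: eps; exact: nbhs_right_gt.
rewrite dvgP // lee_fin; exact: ler0n.
Unshelve. all: by end_near.
Qed.
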